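(* $S^{(1)}(\beta)=0$ if and only if \[ \begin{cases} K(\chi)-K(\rho\chi)\equiv 0\pmod{4\mathcal{P}} & \text{if } q\equiv 1\pmod 4,\\ 2+K(\chi)+K(\rho\chi)\equiv 0\pmod{4\mathcal{P}} & \text{if } q\equiv 3\pmod 4, \end{cases} \] where the congruences are modulo the ideal $4\mathcal{P}$ of $\mathbb{Z}[\zeta_k]$.
   Context: Let $p$ be an odd prime, $m\ge1$, $q=p^m$, $\alpha$ a primitive element of $\mathbb{F}_q$, and $T=q-1$. The binary SLCE sequence $(s_n)_{n\ge0}$ is defined as follows: $s_n=1$ if $\alpha^n+1$ is a nonzero non-square of $\mathbb{F}_q$, and $s_n=0$ otherwise. Put $S(X)=\sum_{n=0}^{T-1}s_nX^n\in\mathbb{F}_2[X]$. For an integer $t\ge0$, the $t$-th Hasse derivative is $S^{(t)}(X)=\sum_{n=t}^{T-1}\binom{n}{t}s_nX^{n-t}$, with coefficients reduced mod $2$. Let $\beta$ be an element of an algebraic closure of $\mathbb{F}_2$ with $\beta^T=1$ and multiplicative order $k>1$ (so $k$ is odd). Let $f$ be the order of $2$ modulo $k$, and write $\zeta_N=e^{2\pi i/N}$. Let $\mathcal{P}$ be a prime ideal of $\mathbb{Z}[\zeta_k]$ containing $2$. Fix a field isomorphism $\phi:\mathbb{F}_2(\beta)=\mathbb{F}_{2^f}\to\mathbb{Z}[\zeta_k]/\mathcal{P}$, and let $\zeta$ be the unique complex $k$-th root of unity with $\phi(\beta)=\zeta+\mathcal{P}$. Multiplicative characters of $\mathbb{F}_q$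 are homomorphisms $\mathbb{F}_q^*\to\mathbb{C}^*$, extended by value $0$ at $0$. Let $\rho$ be the quadratic character. Let $\chi$ be the character with $\chi(\alpha^n)=\zeta^n$. For a character $\psi$, set $K(\psi)=\sum_{x\in\mathbb{F}_q}\rho(x)\psi(1-x)$. *)

(* Defs.v *)
From HB Require Import structures.
From mathcomp Require Import all_boot all_order all_algebra all_field.
Set Implicit Arguments. Unset Strict Implicit. Unset Printing Implicit Defensive.
Import Order.TTheory GRing.Theory Num.Theory.
Local Open Scope ring_scope.

Definition slce (F : finFieldType) (alpha : F) (n : nat) : bool :=
  (alpha ^+ n + 1 != 0) && ~~ [exists y : F, y ^+ 2 == alpha ^+ n + 1].

(* S(X) = sum_{n<T} s_n X^n, with T = q - 1, coefficients taken in a field L of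
   characteristic 2 (the image of F_2[X] in L[X]). *)
Definition slcePoly (F : finFieldType) (alpha : F) (L : fieldType) : {poly L} :=
  \poly_(n < #|F|.-1) (slce alpha n)%:R.

Definition hasse (L : fieldType) (p : {poly L}) (t : nat) : {poly L} := p^`N(t).

Definition rho (F : finFieldType) (x : F) : algC :=
  if x == 0 then 0 else if [exists y : F, y ^+ 2 == x] then 1 else -1.

Definition chi (F : finFieldType) (alpha : F) (zeta : algC) (x : F) : algC :=
  match [pick n : 'I_(#|F|.-1) | alpha ^+ n == x] with
  | Some n => zeta ^+ n
  | None => 0
  end.

Definition Ksum (F : finFieldType) (psi : F -> algC) : algC :=
  \sum_(x : F) rho x * psi (1 - x).

(* zeta_k = e^{2 pi i / k}  (k.-root (-1) = e^{i pi / k} in algC). *)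
Definition zetaN (k : nat) : algC := (k.-root (-1)) ^+ 2.

Definition Zzeta (k : nat) (x : algC) : Prop :=
  exists f : {poly int}, x = (map_poly (fun z : int => z%:~R) f).[zetaN k].

Definition is_ideal_in (R I : algC -> Prop) : Prop :=
  (forall x, I x -> R x) /\ I 0 /\
  (forall x y, I x -> I y -> I (x - y)) /\
  (forall r x, R r -> I x -> I (r * x)).

Definition is_prime_ideal_in (R I : algC -> Prop) : Prop :=
  is_ideal_in R I /\ ~ I 1 /\
  (forall a b, R a -> R b -> I (a * b) -> I a \/ I b).

Definition in4P (P : algC -> Prop) (x : algC) : Prop :=
  exists2 y, P y & x = 4 * y.

(* F_2(beta) inside a field L of characteristic 2: the subring generated by
   beta (which is a field since beta is algebraic over F_2). *)
Definition F2adj (L : fieldType) (beta : L) (x : L) : Prop :=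
  exists f : {poly int}, x = (map_poly (fun z : int => z%:~R) f).[beta].

(* phi : F_2(beta) -> Z[zeta_k]/P is a field isomorphism, where phi is given by
   a choice of representatives phi x in Z[zeta_k] of the cosets phi(x) + P. *)
Definition is_iso_to_quot (L : fieldType) (beta : L) (R P : algC -> Prop)
    (phi : L -> algC) : Prop :=
  (forall x, F2adj beta x -> R (phi x)) /\
      (forall x y, F2adj beta x -> F2adj beta y -> P (phi (x + y) - (phi x + phi y))) /\
      (forall x y, F2adj beta x -> F2adj beta y -> P (phi (x * y) - phi x * phi y)) /\
      P (phi 1 - 1) /\
      (forall x y, F2adj beta x -> F2adj beta y -> P (phi x - phi y) -> x = y) /\
    (forall z, R z -> exists2 x, F2adj beta x & P (z - phi x)).

(* Main.v *)
Require Import Defs.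
From HB Require Import structures.
From mathcomp Require Import all_boot all_order all_algebra all_field.
From mathcomp Require Import zify ring.
Set Implicit Arguments. Unset Strict Implicit. Unset Printing Implicit Defensive.
Import Order.TTheory GRing.Theory Num.Theory.
Local Open Scope ring_scope.

Section Ev.
Variables (R : comNzRingType) (a : R).
Definition Ev (x : R) := exists f : {poly int}, x = (map_poly (fun z : int => z%:~R) f).[a].
Lemma Ev0 : Ev 0. Proof. by exists 0; rewrite rmorph0 horner0. Qed.
Lemma Ev1 : Ev 1. Proof. by exists 1; rewrite rmorph1 hornerC. Qed.
Lemma Eva : Ev a. Proof. by exists 'X; rewrite map_polyX hornerX. Qed.
Lemma EvB x y : Ev x -> Ev y -> Ev (x - y).
Proof. by move=> [f ->] [g ->]; exists (f - g); rewrite rmorphB hornerD hornerN. Qed.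
Lemma EvD x y : Ev x -> Ev y -> Ev (x + y).
Proof. by move=> [f ->] [g ->]; exists (f + g); rewrite rmorphD hornerD. Qed.
Lemma EvN x : Ev x -> Ev (- x).
Proof. by move=> h; rewrite -sub0r; apply: EvB => //; apply: Ev0. Qed.
Lemma EvM x y : Ev x -> Ev y -> Ev (x * y).
Proof. by move=> [f ->] [g ->]; exists (f * g); rewrite rmorphM hornerM. Qed.
Lemma EvX x n : Ev x -> Ev (x ^+ n).
Proof. move=> h; elim: n => [|n IH]; first by rewrite expr0; apply: Ev1.
by rewrite exprS; apply: EvM. Qed.
Lemma Evn n : Ev n%:R.
Proof. elim: n => [|n IH]; first exact: Ev0. by rewrite -addn1 natrD; apply: EvD => //; apply: Ev1. Qed.
Lemma Evsum I (r : seq I) (Q : pred I) f : (forall i, Q i -> Ev (f i)) -> Ev (\sum_(i <- r | Q i) f i).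
Proof. move=> h; elim/big_rec: _ => [|i x Qi Hx]; first exact: Ev0. by apply: EvD => //; apply: h. Qed.
End Ev.

Lemma Zzeta_Ev k x : Zzeta k x <-> Ev (zetaN k) x. Proof. by []. Qed.
Lemma F2adj_Ev (L : fieldType) (b x : L) : F2adj b x <-> Ev b x. Proof. by []. Qed.

Section Ideal.
Variables (R I : algC -> Prop).
Hypothesis RI : is_ideal_in R I.
Lemma I_R x : I x -> R x. Proof. by move: RI => [h _]; apply: h. Qed.
Lemma I0 : I 0. Proof. by move: RI => [_ [h _]]. Qed.
Lemma IB x y : I x -> I y -> I (x - y). Proof. by move: RI => [_ [_ [h _]]]; apply: h. Qed.
Lemma IN x : I x -> I (- x). Proof. by move=> h; rewrite -sub0r; apply: IB => //; apply: I0. Qed.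
Lemma ID x y : I x -> I y -> I (x + y). Proof. by move=> hx hy; have := IB hx (IN hy); rewrite opprK. Qed.
Lemma IM r x : R r -> I x -> I (r * x). Proof. by move: RI => [_ [_ [_ h]]]; apply: h. Qed.
Definition cg x y := I (x - y).
Lemma cg_refl x : cg x x. Proof. by rewrite /cg subrr; apply: I0. Qed.
Lemma cg_sym x y : cg x y -> cg y x. Proof. by rewrite /cg => h; rewrite -opprB; apply: IN. Qed.
Lemma cg_trans x y z : cg x y -> cg y z -> cg x z.
Proof. by move=> h1 h2; have := ID h1 h2; rewrite /cg addrA subrK. Qed.
Lemma cgD x y x' y' : cg x x' -> cg y y' -> cg (x + y) (x' + y').
Proof. by move=> h1 h2; have := ID h1 h2; rewrite /cg opprD addrACA. Qed.
Lemma cgM x y x' y' : R x -> R y' -> cg x x' -> cg y y' -> cg (x * y) (x' * y').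
Proof.
move=> Rx Ry' h1 h2; have := ID (IM Rx h2) (IM Ry' h1).
by rewrite /cg mulrBr mulrBr [y' * _]mulrC [y' * x']mulrC addrA subrK.
Qed.
End Ideal.

Lemma hasse_eval (L : fieldType) (b : L) (T : nat) (c : nat -> bool) :
  2 \in [pchar L] ->
  b * ((\poly_(n < T) (c n)%:R : {poly L})^`N(1)).[b] =
  \sum_(n < T) (odd n && c n)%:R * b ^+ n.
Proof.
move=> ch2.
set p := \poly_(n < T) (c n)%:R : {poly L}.
have szp : (size p <= T)%N by apply: size_poly.
have szd : (size p^`() <= T)%N.
  case: (eqVneq p 0) => [->|pn0]; first by rewrite deriv0 size_poly0.
  by apply: leq_trans (ltnW (lt_size_deriv pn0)) szp.
rewrite nderivn1 (horner_coef_wide _ szd) big_distrr /=.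
set g := fun n : nat => p`_n *+ n * b ^+ n.
have gE : forall n, (n < T)%N -> g n = (odd n && c n)%:R * b ^+ n.
  move=> n lnT; rewrite /g coef_poly lnT; congr (_ * _).
  case: (c n); last by rewrite mul0rn andbF.
  by rewrite andbT -[LHS](GRing.natr_mod_pchar ch2) modn2.
have gT : g T = 0 by rewrite /g coef_poly ltnn mul0rn mul0r.
have g0 : g 0%N = 0 by rewrite /g mulr0n mul0r.
transitivity (\sum_(n < T.+1) g n).
  rewrite big_ord_recl g0 add0r; apply: eq_bigr => i _.
  rewrite /g coef_deriv /bump /=. rewrite exprS mulrCA. done.
rewrite big_ord_recr /= gT addr0; apply: eq_bigr => i _; exact: gE.
Qed.

Section Phi.
Variables (L : fieldType) (beta : L) (R P : algC -> Prop) (phi : L -> algC) (zeta : algC).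
Hypothesis RP : is_ideal_in R P.
Hypothesis iso : is_iso_to_quot beta R P phi.
Hypothesis R0 : R 0.
Hypothesis R1 : R 1.
Hypothesis RD : forall x y, R x -> R y -> R (x + y).
Hypothesis RM : forall x y, R x -> R y -> R (x * y).
Hypothesis Rz : R zeta.
Hypothesis Pz : P (phi beta - zeta).

Lemma phiR x : F2adj beta x -> R (phi x). Proof. by move: iso => [h _]; apply: h. Qed.
Lemma phiD x y : F2adj beta x -> F2adj beta y -> cg P (phi (x + y)) (phi x + phi y).
Proof. by move: iso => [_ [h _]]; apply: h. Qed.
Lemma phiM x y : F2adj beta x -> F2adj beta y -> cg P (phi (x * y)) (phi x * phi y).
Proof. by move: iso => [_ [_ [h _]]]; apply: h. Qed.
Lemma phi1 : cg P (phi 1) 1. Proof. by move: iso => [_ [_ [_ [h _]]]]. Qed.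
Lemma phi_inj x y : F2adj beta x -> F2adj beta y -> cg P (phi x) (phi y) -> x = y.
Proof. by move: iso => [_ [_ [_ [_ [h _]]]]]; apply: h. Qed.
Lemma phi0 : cg P (phi 0) 0.
Proof.
have h := phiD (Ev0 beta) (Ev0 beta); rewrite addr0 /cg opprD addrA subrr add0r in h.
by rewrite /cg subr0 -[phi 0]opprK; exact: (IN RP h).
Qed.
Lemma RX x n : R x -> R (x ^+ n).
Proof. move=> h; elim: n => [|n IH]; first by rewrite expr0. by rewrite exprS; apply: RM. Qed.
Lemma Rnat n : R n%:R.
Proof. elim: n => [|n IH] //; by rewrite -addn1 natrD; apply: RD. Qed.
Lemma Rsum I (r : seq I) (Q : pred I) f : (forall i, Q i -> R (f i)) -> R (\sum_(i <- r | Q i) f i).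
Proof. move=> h; elim/big_rec: _ => [|i x Qi Hx] //. by apply: RD => //; apply: h. Qed.

Lemma Fb : F2adj beta beta. Proof. exact: Eva. Qed.
Lemma FX n : F2adj beta (beta ^+ n). Proof. exact: EvX n (Eva beta). Qed.
Lemma Fn n : F2adj beta n%:R. Proof. exact: Evn. Qed.
Lemma FM x y : F2adj beta x -> F2adj beta y -> F2adj beta (x * y). Proof. exact: EvM. Qed.

Lemma phiX n : cg P (phi (beta ^+ n)) (zeta ^+ n).
Proof.
elim: n => [|n IH]; first by rewrite !expr0; apply: phi1.
rewrite !exprSr; apply: (cg_trans RP (phiM (FX n) Fb)).
apply: (cgM RP); [exact: phiR (FX n) | exact: Rz | exact: IH | exact: Pz].
Qed.

Lemma phib (d : bool) : cg P (phi d%:R) d%:R.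
Proof. by case: d; [exact: phi1 | exact: phi0]. Qed.

Lemma phi_sum (T : nat) (d : nat -> bool) :
  cg P (phi (\sum_(n < T) (d n)%:R * beta ^+ n)) (\sum_(n < T) (d n)%:R * zeta ^+ n).
Proof.
elim: T => [|T IH]; first by rewrite !big_ord0; exact: phi0.
rewrite !big_ord_recr /=.
have FS : F2adj beta (\sum_(n < T) (d n)%:R * beta ^+ n).
  by apply: Evsum => i _; apply: FM; [apply: Fn | apply: FX].
have Ft : F2adj beta ((d T)%:R * beta ^+ T) by apply: FM; [apply: Fn | apply: FX].
apply: (cg_trans RP (phiD FS Ft)); apply: (cgD RP IH).
apply: (cg_trans RP (phiM (Fn _) (FX T))).
apply: (cgM RP); [exact: phiR (Fn _) | exact: RX | exact: phib | exact: phiX].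
Qed.
End Phi.

Lemma one_neq_m1 : (1 : algC) == -1 = false.
Proof. by rewrite -addr_eq0 -mulr2n mulrn_eq0 oner_eq0. Qed.

Section Chars.
Variables (F : finFieldType) (alpha : F) (zeta : algC).
Local Notation T := (#|F|.-1).
Hypothesis prim : T.-primitive_root alpha.
Hypothesis Teven : ~~ odd T.
Hypothesis hz : zeta ^+ (T %/ 2) = 1.

Lemma Tgt0 : (0 < T)%N. Proof. exact: prim_order_gt0 prim. Qed.
Lemma cardT : #|F| = T.+1.
Proof. have := Tgt0; case: #|F| => //. Qed.
Lemma Tdef : T = (T %/ 2 * 2)%N.
Proof. by rewrite divnK // dvdn2. Qed.
Lemma zT : zeta ^+ T = 1.
Proof. rewrite [X in _ ^+ X]Tdef exprM hz expr1n //. Qed.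

Lemma unitX (x : F) : x != 0 -> x ^+ T = 1.
Proof.
move=> xn0; apply: (mulIf xn0); rewrite mul1r -exprSr -cardT; exact: expf_card.
Qed.

Lemma expE (x : F) : x != 0 -> exists n : 'I_T, x = alpha ^+ n.
Proof. by move=> /unitX /(prim_rootP prim) [i ->]; exists i. Qed.

Lemma alpha_ne0 : alpha != 0.
Proof.
apply/negP => /eqP a0; have := prim_expr_order prim; rewrite a0 expr0n.
have := Tgt0; case: T => // n _ /eqP; by rewrite eq_sym oner_eq0.
Qed.

Lemma powne0 n : alpha ^+ n != 0. Proof. exact: expf_neq0 alpha_ne0. Qed.

Lemma chiX j : chi alpha zeta (alpha ^+ j) = zeta ^+ j.
Proof.
rewrite /chi; case: pickP => [m /eqP hm | hn].
  have := eq_prim_root_expr prim m j; rewrite hm eqxx => /esym/eqP hmod.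
  by rewrite -(expr_mod _ zT) -[in RHS](expr_mod _ zT) hmod.
have := hn (Ordinal (ltn_pmod j Tgt0)); by rewrite /= (prim_expr_mod prim) eqxx.
Qed.

Lemma chi0 : chi alpha zeta 0 = 0.
Proof.
rewrite /chi; case: pickP => [m /eqP hm | //].
by move: (powne0 m); rewrite hm eqxx.
Qed.

Lemma rhoX j : rho (alpha ^+ j) = (-1) ^+ j.
Proof.
rewrite /rho (negbTE (powne0 j)) -signr_odd.
case: (boolP [exists y, y ^+ 2 == alpha ^+ j]) => [/existsP [y /eqP hy] | hne].
  have yn0 : y != 0 by apply/negP => /eqP y0; move: (powne0 j); rewrite -hy y0 expr0n /= eqxx.
  have [i hi] := expE yn0.
  have := eq_prim_root_expr prim (i * 2) j; rewrite exprM -hi hy eqxx => /esym hmod.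
  have : (j %% 2 = (i * 2) %% 2)%N.
    have d2 : (2 %| T)%N by rewrite dvdn2.
    by rewrite -(modn_dvdm j d2) -(eqP hmod) (modn_dvdm _ d2).
  by rewrite modnMl modn2 => ->.
case oj: (odd j) => //.
exfalso; move/negP: hne; apply; apply/existsP; exists (alpha ^+ (j %/ 2)).
by rewrite -exprM divnK // dvdn2 oj.
Qed.

Lemma sumF (f : F -> algC) : \sum_(x : F) f x = f 0 + \sum_(n < T) f (alpha ^+ n).
Proof.
rewrite (bigD1 0) //=; congr (_ + _).
have inj : {in [set: 'I_T] &, injective (fun n : 'I_T => alpha ^+ n)}.
  move=> a b _ _ /eqP; rewrite (eq_prim_root_expr prim) !modn_small // => /eqP/val_inj //.
have -> : \sum_(n < T) f (alpha ^+ n) = \sum_(n in [set: 'I_T]) f (alpha ^+ n).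
  by apply: eq_bigl => n; rewrite in_setT.
rewrite -(big_imset _ inj) /=.
symmetry; apply: eq_bigl => x; apply/imsetP/idP.
  by move=> [n _ ->]; apply: powne0.
by move=> /expE [n ->]; exists n; rewrite ?in_setT.
Qed.


Hypothesis z1 : zeta != 1.
Hypothesis zm1 : zeta != -1.

Lemma rho0 : rho (0 : F) = 0. Proof. by rewrite /rho eqxx. Qed.

Lemma sum_chi : \sum_(x : F) chi alpha zeta x = 0.
Proof.
rewrite sumF chi0 add0r; under eq_bigr do rewrite chiX.
have := subrX1 zeta T; rewrite zT subrr => /esym/eqP.
by rewrite mulf_eq0 subr_eq0 (negbTE z1) /= => /eqP.
Qed.

Lemma sum_rhochi : \sum_(x : F) rho x * chi alpha zeta x = 0.
Proof.
rewrite sumF chi0 mulr0 add0r; under eq_bigr do rewrite chiX rhoX -exprMn.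
have := subrX1 ((-1) * zeta) T.
rewrite exprMn zT mulr1 -signr_odd (negbTE Teven) expr0 subrr => /esym/eqP.
rewrite mulf_eq0 subr_eq0 mulN1r eqr_oppLR (negbTE zm1) /= => /eqP //.
Qed.

Lemma alpha_half : alpha ^+ (T %/ 2) = -1.
Proof.
have h2 : (alpha ^+ (T %/ 2)) ^+ 2 = 1 by rewrite -exprM -Tdef (prim_expr_order prim).
have hn1 : alpha ^+ (T %/ 2) != 1.
  rewrite -[X in _ != X](expr0 alpha) (eq_prim_root_expr prim) mod0n modn_small.
    have := Tgt0; have := Tdef; case: (T %/ 2)%N => //= n; lia.
  have := Tgt0; have := Tdef; lia.
have := subr_sqr (alpha ^+ (T %/ 2)) 1; rewrite h2 expr1n subrr => /esym/eqP.
rewrite mulf_eq0 subr_eq0 (negbTE hn1) /= addr_eq0 => /eqP //.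
Qed.

Lemma chiN (x : F) : chi alpha zeta (- x) = chi alpha zeta x.
Proof.
case: (eqVneq x 0) => [->|xn0]; first by rewrite oppr0.
have [n ->] := expE xn0.
by rewrite -mulN1r -alpha_half -exprD !chiX exprD hz mul1r.
Qed.

Lemma rhoN (x : F) : rho (- x) = rho (-1 : F) * rho x.
Proof.
case: (eqVneq x 0) => [->|xn0]; first by rewrite oppr0 rho0 mulr0.
have [n ->] := expE xn0.
by rewrite -[- alpha ^+ n]mulN1r -alpha_half -exprD !rhoX exprD.
Qed.

Lemma Kchi : \sum_(x : F) rho (x + 1) * chi alpha zeta x = Ksum (chi alpha zeta).
Proof.
rewrite (reindex_inj (@oppr_inj _)) /Ksum.
have inj : injective (fun y : F => 1 - y) by move=> a b /addrI /oppr_inj.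
rewrite [RHS](reindex_inj inj) /=; apply: eq_bigr => y _.
have -> : (1 : F) - (1 - y) = y by ring.
by rewrite chiN [- y + 1]addrC.
Qed.

Lemma Kchi2 : \sum_(x : F) rho x * rho (x + 1) * chi alpha zeta x =
  rho (-1 : F) * Ksum (fun x => rho x * chi alpha zeta x).
Proof.
rewrite (reindex_inj (@oppr_inj _)) /Ksum mulr_sumr.
have inj : injective (fun y : F => 1 - y) by move=> a b /addrI /oppr_inj.
rewrite [RHS](reindex_inj inj) /=; apply: eq_bigr => y _.
have -> : (1 : F) - (1 - y) = y by ring.
rewrite chiN rhoN [- y + 1]addrC; ring.
Qed.

Lemma slce_rho n : slce alpha n = (rho (alpha ^+ n + 1) == -1).
Proof.
rewrite /slce /rho; case: eqP => _ /=; first by rewrite eq_sym oppr_eq0 oner_eq0.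
by case: [exists _, _] => /=; rewrite ?one_neq_m1 ?eqxx.
Qed.

Lemma odd_rho n : odd n = (rho (alpha ^+ n) == -1).
Proof. by rewrite rhoX -signr_odd; case: (odd n); rewrite /= ?eqxx ?expr0 ?one_neq_m1. Qed.

Lemma rho_pm (y : F) : y != 0 -> rho y = 1 \/ rho y = -1.
Proof. by rewrite /rho => /negbTE ->; case: [exists _, _]; [left|right]. Qed.

Lemma pointwise (x : F) :
  4 * (((rho x == -1) && (rho (x + 1) == -1))%:R * chi alpha zeta x) =
  (1 - rho x) * (1 - rho (x + 1)) * chi alpha zeta x
   - (x == -1)%:R * ((1 - rho x) * chi alpha zeta x).
Proof.
case: (eqVneq x 0) => [->|xn0]; first by rewrite chi0 !mulr0 subrr.
case: (eqVneq x (-1)) => [->|xm1].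
  have h0 : ((0 : algC) == -1) = false by rewrite eq_sym oppr_eq0 oner_eq0.
  rewrite addNr rho0 h0 andbF /=; ring.
have x1n0 : x + 1 != 0 by rewrite addr_eq0.
have [->|->] := rho_pm xn0; have [->|->] := rho_pm x1n0;
  rewrite ?eqxx ?one_neq_m1 /=; ring.
Qed.

Lemma key :
  4 * \sum_(n < T) (odd n && slce alpha n)%:R * zeta ^+ n =
  - Ksum (chi alpha zeta) + rho (-1 : F) * Ksum (fun x => rho x * chi alpha zeta x)
  - (1 - rho (-1 : F)).
Proof.
have -> : \sum_(n < T) (odd n && slce alpha n)%:R * zeta ^+ n =
  \sum_(x : F) ((rho x == -1) && (rho (x + 1) == -1))%:R * chi alpha zeta x.
  rewrite sumF chi0 mulr0 add0r; apply: eq_bigr => n _.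
  by rewrite chiX odd_rho slce_rho.
rewrite mulr_sumr; under eq_bigr do rewrite pointwise.
rewrite sumrB.
have -> : \sum_(x : F) (x == -1)%:R * ((1 - rho x) * chi alpha zeta x) = 1 - rho (-1 : F).
  rewrite (bigD1 (-1)) //= eqxx mul1r big1 ?addr0.
    by rewrite chiN -(expr0 alpha) chiX expr0 mulr1.
  by move=> x /negbTE ->; rewrite mul0r.
have e : forall x : F, (1 - rho x) * (1 - rho (x + 1)) * chi alpha zeta x =
  chi alpha zeta x - rho x * chi alpha zeta x - rho (x + 1) * chi alpha zeta x
  + rho x * rho (x + 1) * chi alpha zeta x by move=> x; ring.
under eq_bigr do rewrite e.
rewrite big_split /= !sumrB sum_chi sum_rhochi Kchi Kchi2; ring.
Qed.

Lemma rho_m1 : rho (-1 : F) = (-1) ^+ (T %/ 2). Proof. by rewrite -alpha_half rhoX. Qed.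

End Chars.

Unset Implicit Arguments.
Set Strict Implicit.

Lemma in4P_iff (R P : algC -> Prop) (A E : algC) :
  is_ideal_in R P -> 4 * A = - E -> (P A <-> in4P P E).
Proof.
move=> RP h; split.
  move=> PA; exists (- A); first by have := IN RP PA.
  by rewrite mulrN h opprK.
move=> [y Py hE]; have : A = - y.
  apply: (mulfI (_ : (4 : algC) != 0)); first by rewrite pnatr_eq0.
  by rewrite h hE mulrN.
by move=> ->; have := IN RP Py.
Qed.

Lemma mod4 (q h : nat) : q = (h * 2).+1 -> (q %% 4 == 1)%N = ~~ odd h.
Proof.
move=> ->; have := modn2 h; case: (odd h) => /= H.
  by apply/negbTE/eqP; lia.
by apply/eqP; lia.
Qed.

Theorem mainTheorem3
  (p m : nat) (F : finFieldType) (alpha : F)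
  (L : fieldType) (beta : L) (k : nat)
  (P : algC -> Prop) (phi : L -> algC) (zeta : algC) :
  prime p -> odd p -> (0 < m)%N -> #|F| = (p ^ m)%N ->
  (#|F|.-1).-primitive_root alpha ->
  2 \in [pchar L] ->
  beta ^+ (#|F|.-1) = 1 -> k.-primitive_root beta -> (1 < k)%N ->
  is_prime_ideal_in (Zzeta k) P -> P 2 ->
  is_iso_to_quot beta (Zzeta k) P phi ->
  zeta ^+ k = 1 -> P (phi beta - zeta) ->
  (hasse (slcePoly alpha L) 1).[beta] = 0 <->
  (if (#|F| %% 4 == 1)%N
   then in4P P (Ksum (chi alpha zeta) - Ksum (fun x => rho x * chi alpha zeta x))
   else in4P P (2 + Ksum (chi alpha zeta) + Ksum (fun x => rho x * chi alpha zeta x))).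
Proof.
move=> hp hodd hm hq prim ch2 bT bprim k1 [RP _] P2 iso hzk Pz.
have R1 : Zzeta k 1 := Ev1 (zetaN k).
have RM : forall x y, Zzeta k x -> Zzeta k y -> Zzeta k (x * y) := @EvM _ (zetaN k).
have Rz : Zzeta k zeta.
  have -> : zeta = phi beta - (phi beta - zeta) by ring.
  exact: EvB (phiR iso (Fb beta)) (I_R RP Pz).
have Teven : ~~ odd #|F|.-1.
  have oq : odd #|F| by rewrite hq oddX hodd orbT.
  by move: oq; case: #|F|.
have T0 := Tgt0 prim.
have kT : (k %| #|F|.-1)%N by rewrite (prim_order_dvd bprim) bT.
have kodd : odd k.
  case ke: (odd k) => //; exfalso.
  have k2 : (k = k %/ 2 * 2)%N by rewrite divnK // dvdn2 ke.
  set b := beta ^+ (k %/ 2).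
  have b2 : b ^+ 2 = 1 by rewrite -exprM -k2 (prim_expr_order bprim).
  have bn1 : b != 1.
    rewrite -[X in _ != X](expr0 beta) (eq_prim_root_expr bprim) mod0n modn_small; lia.
  have := subr_sqr b 1; rewrite b2 expr1n subrr => /esym/eqP.
  rewrite mulf_eq0 subr_eq0 (negbTE bn1) /= addr_eq0 (GRing.oppr_pchar2 ch2).
  by rewrite (negbTE bn1).
have kh : (k %| #|F|.-1 %/ 2)%N.
  by rewrite -(Gauss_dvdl _ (_ : coprime k 2)) ?coprimen2 // -(Tdef Teven).
have hz : zeta ^+ (#|F|.-1 %/ 2) = 1.
  by case/dvdnP: kh => c ->; rewrite mulnC exprM hzk expr1n.
have cgb1 : cg P (phi beta) 1 -> False.
  move=> h; have e : beta = 1.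
    apply: (phi_inj iso (Fb beta) (Ev1 beta)).
    by have := cg_trans RP h (cg_sym RP (phi1 iso)).
  have := prim_order_dvd bprim 1; rewrite e expr1n eqxx dvdn1 => /eqP k1'.
  by rewrite k1' in k1.
have z1 : zeta != 1.
  by apply/negP => /eqP ez; apply: cgb1; rewrite /cg -ez.
have zm1 : zeta != -1.
  apply/negP => /eqP ez; apply: cgb1; apply: (cg_trans RP (y := -1)).
    by rewrite /cg -ez.
  have e : (-1 - 1 : algC) = - 2 by ring.
  by rewrite /cg e; have := IN RP P2.
set d := fun n => odd n && slce alpha n.
set B := \sum_(n < #|F|.-1) (d n)%:R * beta ^+ n.
set A := \sum_(n < #|F|.-1) (d n)%:R * zeta ^+ n.
have bn0 : beta != 0.
  apply/negP => /eqP b0; move: bT; rewrite b0 expr0n; case: (#|F|.-1) T0 => // n _ /eqP.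
  by rewrite eq_sym oner_eq0.
have hB : beta * (hasse (slcePoly alpha L) 1).[beta] = B.
  by rewrite /hasse /slcePoly hasse_eval.
have step1 : (hasse (slcePoly alpha L) 1).[beta] = 0 <-> P A.
  have FB : F2adj beta B by apply: Evsum => i _; apply: FM; [apply: Fn | apply: FX].
  have cgBA := phi_sum RP iso R1 RM Rz Pz (#|F|.-1) d.
  split.
    move=> h0; rewrite h0 mulr0 in hB.
    rewrite -/B -hB in cgBA.
    have := cg_trans RP (cg_sym RP cgBA) (phi0 RP iso); by rewrite /cg subr0.
  move=> PA; apply/eqP; rewrite -(mulIr_eq0 _ (mulIf bn0)) mulrC hB; apply/eqP.
  apply: (phi_inj iso FB (Ev0 beta)).
  apply: (cg_trans RP cgBA); apply: (cg_trans RP (y := 0)).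
    by rewrite /cg subr0.
  by have := cg_sym RP (phi0 RP iso).
rewrite step1.
have hkey := key prim Teven hz z1 zm1.
rewrite -/d -/A in hkey.
rewrite (rho_m1 prim Teven z1 zm1) in hkey.
have qe : #|F| = ((#|F|.-1 %/ 2) * 2).+1 by rewrite -(Tdef Teven) {1}(cardT prim).
rewrite (mod4 _ _ qe); rewrite -signr_odd in hkey.
case: (odd (#|F|.-1 %/ 2)) in hkey *; rewrite /= ?expr0 ?expr1 in hkey *.
  apply: (@in4P_iff _ _ _ _ RP); rewrite hkey; ring.
apply: (@in4P_iff _ _ _ _ RP); rewrite hkey; ring.
Qed.
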